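(* A monoid $S$ is weakly right coherent if and only if $S^0$ is weakly right coherent.
   Context: For a semigroup $S$, $S^0$ denotes $S$ if $S$ has a zero, and otherwise $S$ with a zero adjoined. A semigroup $T$ is weakly right coherent if $T^1$ is weakly right coherent, where $T^1$ is $T$ if $T$ is a monoid and otherwise $T$ with an identity adjoined; a monoid $M$ is weakly right coherent if every finitely generated right ideal of $M$ is finitely presented as a right $M$-act (equivalently, known: $M$ is right ideal Howson and finitely right equated). *)

(* Defs.v *)
From Stdlib Require Import List ClassicalDescription ProofIrrelevance.
From mathcomp Require Import ssreflect ssrfun ssrbool eqtype ssrnat fintype.
Set Implicit Arguments. Unset Strict Implicit. Unset Printing Implicit Defensive.

Record monoid := Monoid {
  mcar :> Type;
  mop : mcar -> mcar -> mcar;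
  mone : mcar;
  mopA : forall x y z, mop x (mop y z) = mop (mop x y) z;
  mop1l : forall x, mop mone x = x;
  mop1r : forall x, mop x mone = x }.

Record ract (M : monoid) := RAct {
  acar :> Type;
  act : acar -> M -> acar;
  act1 : forall a, act a (mone M) = a;
  actA : forall a s t, act (act a s) t = act a (mop s t) }.

(** Free right M-act on n generators: 'I_n * M, with (i,s).t = (i, st).
    The right congruence on it generated by a list R of pairs. *)
Inductive gen_rcong (M : monoid) (n : nat) (R : list (('I_n * M) * ('I_n * M)))
  : 'I_n * M -> 'I_n * M -> Prop :=
| gc_base u v : In (u, v) R -> gen_rcong R u v
| gc_refl u : gen_rcong R u u
| gc_sym u v : gen_rcong R u v -> gen_rcong R v u
| gc_trans u v w : gen_rcong R u v -> gen_rcong R v w -> gen_rcong R u w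
| gc_comp u v s : gen_rcong R u v ->
    gen_rcong R (u.1, mop u.2 s) (v.1, mop v.2 s).

(** A is finitely presented: A is isomorphic to F_n / rho_R for a finite
    set R of relations, i.e. there is a surjective act morphism from the free
    act on n generators onto A whose kernel is the congruence generated by R. *)
Definition fin_presented (M : monoid) (A : ract M) : Prop :=
  exists (n : nat) (f : 'I_n * M -> A) (R : list (('I_n * M) * ('I_n * M))),
    (forall (i : 'I_n) (s t : M), f (i, mop s t) = act (f (i, s)) t) /\
    (forall a : A, exists u, f u = a) /\
    (forall u v, f u = f v <-> gen_rcong R u v).

Definition right_ideal (M : monoid) (I : M -> Prop) : Prop :=
  forall x s, I x -> I (mop x s).

Definition fin_gen_right_ideal (M : monoid) (I : M -> Prop) : Prop :=
  exists X : list M, forall y, I y <-> exists x s, In x X /\ y = mop x s.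

Section IdealAct.
Variables (M : monoid) (I : M -> Prop) (HI : right_ideal I).
Definition ideal_act_op (a : {x : M | I x}) (s : M) : {x : M | I x} :=
  exist _ (mop (proj1_sig a) s) (HI s (proj2_sig a)).
Lemma ideal_act1 a : ideal_act_op a (mone M) = a.
Proof. destruct a as [x Hx]; apply: eq_sig_hprop => /=;
  [intros; apply: proof_irrelevance | apply: mop1r]. Qed.
Lemma ideal_actA a s t :
  ideal_act_op (ideal_act_op a s) t = ideal_act_op a (mop s t).
Proof. destruct a as [x Hx]; apply: eq_sig_hprop => /=;
  [intros; apply: proof_irrelevance | symmetry; apply: mopA]. Qed.
Definition ideal_act : ract M := RAct ideal_act1 ideal_actA.
End IdealAct.

Definition weakly_right_coherent (M : monoid) : Prop :=
  forall (I : M -> Prop) (HI : right_ideal I),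
    fin_gen_right_ideal I -> fin_presented (ideal_act HI).

Definition is_zero (M : monoid) (z : M) : Prop :=
  forall x, mop z x = z /\ mop x z = z.
Definition has_zero (M : monoid) : Prop := exists z : M, is_zero z.

Section AdjZero.
Variable S : monoid.
Definition adj0_op (a b : option S) : option S :=
  match a, b with Some x, Some y => Some (mop x y) | _, _ => None end.
Lemma adj0_opA x y z : adj0_op x (adj0_op y z) = adj0_op (adj0_op x y) z.
Proof. by case: x; case: y; case: z => //= *; rewrite mopA. Qed.
Lemma adj0_op1l x : adj0_op (Some (mone S)) x = x.
Proof. by case: x => //= a; rewrite mop1l. Qed.
Lemma adj0_op1r x : adj0_op x (Some (mone S)) = x.
Proof. by case: x => //= a; rewrite mop1r. Qed.
Definition adjoin_zero : monoid := Monoid adj0_opA adj0_op1l adj0_op1r.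
End AdjZero.

Definition monoid0 (S : monoid) : monoid :=
  if excluded_middle_informative (has_zero S) then S else adjoin_zero S.

(* Main.v *)
Require Import Defs.
From Stdlib Require Import List ClassicalDescription ProofIrrelevance.
From mathcomp Require Import ssreflect ssrfun ssrbool eqtype ssrnat seq fintype.
Set Implicit Arguments. Unset Strict Implicit. Unset Printing Implicit Defensive.

Lemma sig_eq (T : Type) (P : T -> Prop) (a b : {x | P x}) :
  proj1_sig a = proj1_sig b -> a = b.
Proof. by move=> h; apply: eq_sig_hprop => // *; apply: proof_irrelevance. Qed.

Lemma gen_rcong_mono (M : monoid) n (R R' : list (('I_n * M) * ('I_n * M))) u v :
  (forall p, In p R -> In p R') -> gen_rcong R u v -> gen_rcong R' u v.
Proof.
move=> H; elim=> *; [apply: gc_base; exact: H|apply: gc_refl|exact: gc_sym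
  |apply: gc_trans; eassumption|exact: gc_comp].
Qed.

Lemma In_mem (T : eqType) (x : T) (s : seq T) : x \in s -> In x s.
Proof. elim: s => //= a s IH; rewrite in_cons; case/orP => [/eqP->|h]; [left|right; exact: IH]; done. Qed.

Lemma In_enum n (i : 'I_n) : In i (enum 'I_n).
Proof. apply: In_mem; exact: mem_enum. Qed.

Lemma I0F : 'I_0 -> False. Proof. by case. Qed.

Lemma empty_fp (M : monoid) (A : ract M) : (A -> False) -> fin_presented A.
Proof.
move=> hA; exists 0, (fun u => False_rect _ (I0F u.1)), nil; split; [|split].
- by move=> i; case: (I0F i).
- by move=> a; case: (hA a).
- by move=> u; case: (I0F u.1).
Qed.

Definition somes (S : Type) (l : list (option S)) : list S :=
  flat_map (fun o => match o with Some x => x::nil | None => nil end) l.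
Arguments somes : simpl never.
Lemma somesP (S : Type) (l : list (option S)) x : In x (somes l) <-> In (Some x) l.
Proof.
rewrite /somes; elim: l => [|[a|] l IH] /=; first by split.
- split; [case=> [->|/IH]; [left|right]|case=> [[->]|/IH]; [left|right]] => //.
- split; [move/IH; right|case=> // /IH] => //.
Qed.

Lemma dir1 (S : monoid) :
  weakly_right_coherent S -> weakly_right_coherent (adjoin_zero S).
Proof.
move=> H J HJ [X HX].
case: X HX => [|x0 X] HX.
  apply: empty_fp => -[o Jo]. by case: (proj1 (HX o) Jo) => x [s [[]]].
have J0 : J None.
  apply/HX; exists x0, None; split; [by left|by case: (x0)].
pose I := fun y : S => J (Some y).
have HI : right_ideal I.
  move=> x s; rewrite /I => Jx; exact: (HJ (Some x) (Some s) Jx).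
have FI : fin_gen_right_ideal I.
  exists (somes (x0::X)).
  move=> y; rewrite /I; split.
  - case/HX=> o [t [Ho E]]. case: o Ho E => [x|] Ho; case: t => [s|] //= [E].
    exists x, s; split; last by []. by apply/somesP.
  - case=> x [s [Hx E]]. move/somesP: Hx => Hx. apply/HX.
    exists (Some x), (Some s); split=> //; by rewrite E.
case: (H I HI FI) => n [f [R [Hm [Hs Hk]]]].
pose F := fun u => proj1_sig (f u).
pose G := fun (u : 'I_n.+1 * adjoin_zero S) =>
  match unlift ord_max u.1, u.2 with Some i, Some s => Some (F (i,s)) | _, _ => None end.
have GJ : forall u, J (G u).
  move=> [i o]; rewrite /G /=; case: (unlift _ i) => [i'|]; case: o => [s|] //=.
  exact: (proj2_sig (f (i',s))).
pose g := fun u => exist J (G u) (GJ u).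
pose z : 'I_n.+1 * adjoin_zero S := (ord_max, Some (mone S)).
pose lp := fun (p : ('I_n * S) * ('I_n * S)) =>
  (((lift ord_max p.1.1, Some p.1.2), (lift ord_max p.2.1, Some p.2.2)) : ('I_n.+1 * adjoin_zero S) * ('I_n.+1 * adjoin_zero S)).
pose R' := List.map lp R ++ List.map (fun i => (((i,None) : 'I_n.+1 * adjoin_zero S), z)) (enum 'I_n.+1).
have Rb : forall i, In ((((i,None) : 'I_n.+1 * adjoin_zero S), z)) R'.
  move=> i; apply: in_or_app; right; apply: (List.in_map (fun i => (((i,None) : 'I_n.+1 * adjoin_zero S), z))); exact: In_enum.
have Hm' : forall i o t, proj1_sig (g (i, adj0_op o t)) = adj0_op (proj1_sig (g (i,o))) t :> option S.
  move=> i o t; rewrite /g /G /=; case: (unlift _ i) => [i'|]; case: o => [s|]; case: t => [t|] //=.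
  by rewrite /F Hm.
have Hz : forall u, G u = None -> gen_rcong R' u z.
  move=> [i o]; case: o => [s|] /=; last by move=> _; apply: gc_base; exact: Rb.
  rewrite /G /=; case: unliftP => [j ->|->] //= _.
  move: (gc_comp (Some s : adjoin_zero S) (gc_base (Rb ord_max))) => /=; rewrite mop1l => h1.
  exact: gc_trans (gc_sym h1) (gc_base (Rb ord_max)).
have Hl : forall a b, gen_rcong R a b ->
    gen_rcong R' (lift ord_max a.1, Some a.2) (lift ord_max b.1, Some b.2).
  move=> a b; elim => [u v Huv|u|u v _ IH|u v w _ IH1 _ IH2|u v s _ IH].
  - apply: gc_base; apply: in_or_app; left; exact: (List.in_map lp _ _ Huv).
  - exact: gc_refl.
  - exact: gc_sym.
  - exact: gc_trans IH1 IH2.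
  - exact: (gc_comp (Some s : adjoin_zero S) IH).
have Gsome : forall u y, G u = Some y -> exists i s, u = (lift ord_max i, Some s) /\ F (i,s) = y.
  move=> [i o] y; rewrite /G /=; case: unliftP => [j ->|->] //; case: o => [s|] //= [<-].
  by exists j, s.
exists n.+1, g, R'; split; [|split].
- move=> i o t; apply: sig_eq; exact: Hm'.
- move=> [[y|] Jy].
  + have [[i s] E] := Hs (exist _ y Jy : ideal_act HI).
    exists (lift ord_max i, Some s); apply: sig_eq => /=; rewrite /G /= liftK.
    by rewrite /F E.
  + exists (ord_max, None); apply: sig_eq; rewrite /= /G /=; by case: unlift.
- move=> u v; split.
  + move=> /(f_equal (@proj1_sig _ _)) /= E.
    case Gu: (G u) E => [y|] E.
    * have [i [s [-> Fy]]] := Gsome _ _ Gu.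
      have [j [t [-> Fy']]] := Gsome _ _ (esym E).
      apply: (Hl (i,s) (j,t)); apply/Hk; apply: sig_eq; by rewrite -/(F (i,s)) -/(F (j,t)) Fy Fy'.
    * exact: gc_trans (Hz _ Gu) (gc_sym (Hz _ (esym E))).
  + elim => [a b Hab|a|a b _ IH|a b c _ IH1 _ IH2|a b s _ IH].
    * case: (in_app_or _ _ _ Hab) => /in_map_iff [p [Ep Hp]].
      - case: p Ep Hp => [[i s] [j t]] [<- <-] Hp.
        apply: sig_eq; rewrite /= /G /= !liftK; congr Some; rewrite /F.
        by congr proj1_sig; apply/Hk; exact: gc_base.
      - case: Ep => <- <-; apply: sig_eq; rewrite /= /G /= unlift_none.
        by case: (unlift ord_max p).
    * done.
    * by rewrite IH.
    * by rewrite IH1.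
    * case: a b IH => [i o] [j o'] IH; apply: sig_eq; move: (Hm' i o s) (Hm' j o' s) => /= -> ->; by move: (f_equal (@proj1_sig _ _) IH) => /= ->.
Qed.

Lemma dir2 (S : monoid) :
  weakly_right_coherent (adjoin_zero S) -> weakly_right_coherent S.
Proof.
move=> H I HI [X HX].
case: X HX => [|x0 X] HX.
  apply: empty_fp => -[o Io]. by case: (proj1 (HX o) Io) => x [s [[]]].
pose T := adjoin_zero S.
pose Xo : list T := List.map Some (x0::X).
pose J := fun o : T => exists x t, In x Xo /\ o = mop x t.
have HJ : right_ideal J.
  move=> o s [x [t [Hx ->]]]; exists x, (mop t s); split=> //; by rewrite mopA.
have FJ : fin_gen_right_ideal J by exists Xo.
have JI : forall y, J (Some y) <-> I y.
  move=> y; split.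
  - case=> [o [t [Ho E]]]. case: (proj1 (in_map_iff _ _ _) Ho) => x [Ex Hx].
    subst o. case: t E => [s|] //= [E]. apply/HX; by exists x, s.
  - move/HX => [x [s [Hx ->]]]; exists (Some x), (Some s); split=> //.
    exact: (List.in_map Some).
have d_in : I x0 by apply/HX; exists x0, (mone S); split; [left|rewrite mop1r].
case: (H J HJ FJ) => n [g [R [Hm [Hs Hk]]]].
pose G := fun u => proj1_sig (g u) : option S.
have GJ : forall u, J (G u) := fun u => proj2_sig (g u).
have Hm' : forall i o t, G (i, adj0_op o t) = adj0_op (G (i,o)) t.
  move=> i o t; exact: (f_equal (@proj1_sig _ _) (Hm i o t)).
have Gk : forall u v, G u = G v <-> gen_rcong R u v.
  move=> u v; split; [move=> E; apply/Hk; exact: sig_eq | by move/Hk; rewrite /G => ->].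
have G1 : forall i s, G (i, Some s) = adj0_op (G (i, Some (mone S))) (Some s).
  move=> i s; rewrite -Hm' /=; by rewrite mop1l.
have G0 : forall i, G (i, None) = None.
  move=> i; move: (Hm' i None None) => /= ->; by case: (G _).
have [j0 nzj0] : exists j0, G (j0, Some (mone S)) <> None.
  have Jx0 : J (Some x0) by apply/JI.
  have [[j o] E] := Hs (exist _ (Some x0) Jx0).
  have EG : G (j, o) = Some x0 by rewrite /G E.
  clear E; case: o EG => [s|]; last by rewrite G0.
  rewrite G1 => EG; exists j; move: EG; by case: (G _).
pose nu := fun i => if excluded_middle_informative (G (i, Some (mone S)) <> None) then i else j0.
have nuP : forall i, G (nu i, Some (mone S)) <> None.
  by move=> i; rewrite /nu; case: excluded_middle_informative.
have nuid : forall i, G (i, Some (mone S)) <> None -> nu i = i.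
  by move=> i h; rewrite /nu; case: excluded_middle_informative.
have Gsome : forall i s, exists y, G (nu i, Some s) = Some y.
  move=> i s; rewrite G1; case E: (G (nu i, Some (mone S))) => [y|] /=; first by eexists.
  by case: (nuP i).
have nzS : forall i s, G (i, Some s) <> None -> G (i, Some (mone S)) <> None.
  by move=> i s; rewrite G1; case: (G _).
pose F := fun u : 'I_n * S => odflt x0 (G (nu u.1, Some u.2)).
have FI : forall u, I (F u).
  move=> [i s]; rewrite /F /=; have := GJ (nu i, Some s); case: (G _) => [y|] //=.
  by move/JI.
pose f : 'I_n * S -> ideal_act HI := fun u => exist I (F u) (FI u).
pose Rs := flat_map (fun p : ('I_n * T) * ('I_n * T) =>
   match p with
   | ((i, Some s), (j, Some t)) =>
       if excluded_middle_informative (G (i, Some s) <> None)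
       then (((i,s),(j,t)) :: nil) else nil
   | _ => nil end) R.
have RsP : forall i s j t, In ((i,s),(j,t)) Rs ->
    In (((i,Some s),(j,Some t)) : ('I_n * T) * ('I_n * T)) R /\ G (i,Some s) <> None.
  move=> i s j t /in_flat_map [[[i' [s'|]] [j' [t'|]]] [Hp Hin]] //.
  move: Hin; case: excluded_middle_informative => // h [[<- <- <- <-]|[]] //.
have RsP' : forall i s j t,
    In (((i,Some s),(j,Some t)) : ('I_n * T) * ('I_n * T)) R -> G (i,Some s) <> None ->
    In ((i,s),(j,t)) Rs.
  move=> i s j t Hin h; apply/in_flat_map; exists ((i,Some s),(j,Some t)); split=> //.
  by case: excluded_middle_informative => //= _; left.
pose Ra := List.map (fun i => ((i, mone S), (nu i, mone S))) (enum 'I_n).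
pose R' := Rs ++ Ra.
have fm : forall i s t, f (i, mop s t) = act (f (i,s)) t.
  move=> i s t; apply: sig_eq; rewrite /= /F /=.
  have [y Ey] := Gsome i s.
  move: (Hm' (nu i) (Some s) (Some t)) => /= ->; by rewrite Ey.
have formS : forall a, G a <> None -> exists i s, a = (i, Some s).
  by move=> [i [s|]] h; [exists i, s|case: h; rewrite G0].
have C : forall a b, gen_rcong R a b -> G a <> None ->
    exists i s j t, a = (i,Some s) /\ b = (j, Some t) /\ gen_rcong Rs (i,s) (j,t).
  move=> a b; elim => [u v Huv|u|u v Hvu IH|u v w Huv IH1 Hvw IH2|u v s' Huv IH] Ga.
  - have [i [s Eu]] := formS _ Ga.
    have Gv : G v = G u by apply/Gk; apply: gc_sym; exact: gc_base.
    have [j [t Ev]] := formS v ltac:(by rewrite Gv).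
    subst u v; exists i, s, j, t; do 2 split => //; apply: gc_base; exact: RsP'.
  - have [i [s Eu]] := formS _ Ga. subst u; exists i, s, i, s; do 2 split => //; exact: gc_refl.
  - have Gv : G v = G u by apply/Gk; exact: gc_sym.
    have [i [s [j [t [E1 [E2 h]]]]]] := IH ltac:(by rewrite -Gv).
    exists j, t, i, s; do 2 split => //; exact: gc_sym.
  - have [i [s [j [t [E1 [E2 h]]]]]] := IH1 Ga.
    have Gv : G v = G u by apply/Gk; exact: gc_sym.
    have [j' [t' [k [r [E1' [E2' h']]]]]] := IH2 ltac:(by rewrite Gv).
    rewrite E2 in E1'; case: E1' => <- <- in h'.
    exists i, s, k, r; do 2 split => //; exact: gc_trans h h'.
  - case: u Huv IH Ga => i o Huv IH /= Ga.
    have Go : G (i, o) <> None by move: Ga; rewrite Hm'; case: (G _).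
    have [i1 [s1 [j [t [E1 [E2 h]]]]]] := IH Go.
    move: E1 => [Ei Eo]; subst i1 o v.
    case: s' Ga => [x|] /= Ga; last by case: Ga; rewrite G0.
    exists i, (mop s1 x), j, (mop t x); do 2 split => //.
    exact: (gc_comp x h).
have link : forall i s, gen_rcong R' (i,s) (nu i, s).
  move=> i s; have hb : In ((i, mone S), (nu i, mone S)) R'.
    apply: in_or_app; right; apply: (List.in_map (fun i => ((i, mone S), (nu i, mone S)))).
    exact: In_enum.
  by move: (gc_comp s (gc_base hb)) => /=; rewrite !mop1l.
exists n, f, R'; split; [exact: fm|split].
- move=> [y Iy]. have Jy := proj2 (JI y) Iy.
  have [[i o] E] := Hs (exist _ (Some y) Jy).
  have EG : G (i,o) = Some y by rewrite /G E.
  clear E; case: o EG => [s|]; last by rewrite G0.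
  move=> EG; have nz := nzS i s ltac:(by rewrite EG).
  exists (i,s); apply: sig_eq; by rewrite /= /F /= nuid // EG.
- move=> [i s] [j t]; split.
  + move=> /(f_equal (@proj1_sig _ _)); rewrite /= /F /=.
    have [y Ey] := Gsome i s; have [y' Ey'] := Gsome j t.
    rewrite Ey Ey' /= => Eyy.
    have hR : gen_rcong R (nu i, Some s) (nu j, Some t) by apply/Gk; rewrite Ey Ey' Eyy.
    have [i1 [s1 [j1 [t1 [[<- <-] [[<- <-] h]]]]]] := C _ _ hR ltac:(by rewrite Ey).
    apply: gc_trans (link i s) _; apply: gc_trans _ (gc_sym (link j t)).
    apply: gen_rcong_mono h => p hp; apply: in_or_app; left; exact: hp.
  + elim => [a b Hab|a|a b _ IH|a b c _ IH1 _ IH2|a b s' _ IH].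
    * case: (in_app_or _ _ _ Hab).
      - case: a b Hab => [i1 s1] [j1 t1] _ /RsP [hR hnz].
        have E : G (i1, Some s1) = G (j1, Some t1) by apply/Gk; exact: gc_base.
        apply: sig_eq; rewrite /= /F /= (nuid i1 (nzS _ _ hnz)) (nuid j1 (nzS j1 t1 ltac:(by rewrite -E))) E //.
      - move/in_map_iff => [k [Ek _]]; case: Ek => <- <-.
        by apply: sig_eq; rewrite /= /F /= (nuid (nu k)) //.
    * done.
    * by rewrite IH.
    * by rewrite IH1.
    * case: a b IH => [i1 o] [j1 o'] IH; by rewrite !fm IH.
Qed.

Lemma adj_equiv (S : monoid) :
  weakly_right_coherent S <-> weakly_right_coherent (adjoin_zero S).
Proof. split; [exact: dir1|exact: dir2]. Qed.

Theorem mainTheorem5 (S : monoid) :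
  weakly_right_coherent S <-> weakly_right_coherent (monoid0 S).
Proof.
unfold monoid0; destruct (excluded_middle_informative (has_zero S)).
- by [].
- exact: adj_equiv.
Qed.
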